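(* Let $N\ge2$ be an integer, $u=1/N$, and $\mathscr{C}_k^u:=F^{-(k-1)}[u,1]$. Then \[\sum_{k=1}^n\lambda(\mathscr{C}_{k+1}^u)\log\!\left(1-\frac{k}{n+N}\right)=O\!\left(\frac{n}{\log n}\right)\qquad(n\to\infty).\]
   Context: $\lambda$ is Lebesgue measure; $F$ is the Farey map, $F(x)=x/(1-x)$ for $0\le x\le1/2$, $F(x)=(1-x)/x$ for $1/2<x\le1$; $F^{-k}$ denotes preimage under the $k$-th iterate. *)

(* Defs.v *)
From Stdlib Require Import Reals Lra Lia.
Open Scope R_scope.

Definition farey (x : R) : R :=
  if Rle_dec x (1/2) then x / (1 - x) else (1 - x) / x.

Definition farey_cyl (u : R) (k : nat) (x : R) : Prop :=
  0 <= x <= 1 /\ u <= Nat.iter (k - 1) farey x <= 1.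

Definition interval_cover_length (A : R -> Prop) (s : R) : Prop :=
  exists a b : nat -> R,
    (forall i, a i <= b i) /\
    (forall x, A x -> exists i, a i < x < b i) /\
    infinite_sum (fun i => b i - a i) s.

(* m is the Lebesgue (outer) measure of A: the infimum of total lengths of
   countable open-interval covers of A. *)
Definition lebesgue_measure_is (A : R -> Prop) (m : R) : Prop :=
  (forall s, interval_cover_length A s -> m <= s) /\
  (forall m', (forall s, interval_cover_length A s -> m' <= s) -> m' <= m).

(* Main.v *)
Require Import Defs.
From Stdlib Require Import Reals Lra Lia Psatz List.
Open Scope R_scope.

Fixpoint sr (a n : nat) (f : nat -> R) : R :=
  match n with O => 0 | S n' => sr a n' f + f (a + n')%nat end.

Lemma sr_ext a n f g : (forall i, (a <= i < a + n)%nat -> f i = g i) -> sr a n f = sr a n g.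
Proof. induction n; simpl; intros H; [reflexivity|]. rewrite IHn by (intros; apply H; lia). rewrite H by lia. reflexivity. Qed.

Lemma sr_le a n f g : (forall i, (a <= i < a + n)%nat -> f i <= g i) -> sr a n f <= sr a n g.
Proof. induction n; simpl; intros H; [lra|]. assert (H1 := H (a+n)%nat ltac:(lia)). assert (sr a n f <= sr a n g) by (apply IHn; intros; apply H; lia). lra. Qed.

Lemma sr_nonneg a n f : (forall i, (a <= i < a + n)%nat -> 0 <= f i) -> 0 <= sr a n f.
Proof. intros H. replace 0 with (sr a n (fun _ => 0)). apply sr_le; auto. induction n; simpl; auto. rewrite IHn; [lra|]. intros; apply H; lia. Qed.

Lemma sr_const a n c : sr a n (fun _ => c) = INR n * c.
Proof. induction n; simpl sr. simpl; lra. rewrite IHn, S_INR. lra. Qed.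

Lemma sr_plus a n f g : sr a n (fun i => f i + g i) = sr a n f + sr a n g.
Proof. induction n; simpl; [lra|]. rewrite IHn; lra. Qed.

Lemma sr_scal a n c f : sr a n (fun i => c * f i) = c * sr a n f.
Proof. induction n; simpl; [lra|]. rewrite IHn; lra. Qed.

Lemma sr_split a n m f : sr a (n + m) f = sr a n f + sr (a + n) m f.
Proof. induction m; simpl. rewrite Nat.add_0_r; lra. rewrite Nat.add_succ_r. simpl. rewrite IHm. rewrite Nat.add_assoc. lra. Qed.

Lemma sr_shift a n m f : sr a n (fun i => f (i + m)%nat) = sr (a + m) n f.
Proof. induction n; simpl; [lra|]. rewrite IHn. replace (a + n + m)%nat with (a + m + n)%nat by lia. lra. Qed.

Lemma sr_front a n f : sr a (S n) f = f a + sr (S a) n f.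
Proof. induction n. simpl. rewrite Nat.add_0_r. lra. change (sr a (S (S n)) f) with (sr a (S n) f + f (a + S n)%nat). rewrite IHn. simpl. replace (a + S n)%nat with (S (a + n)) by lia. lra. Qed.

Lemma sr_swap a n b m (F : nat -> nat -> R) :
  sr a n (fun i => sr b m (fun j => F i j)) = sr b m (fun j => sr a n (fun i => F i j)).
Proof. induction n; simpl. induction m; simpl; [lra|]. rewrite <- IHm; lra.
  rewrite IHn. rewrite <- sr_plus. reflexivity. Qed.

Lemma sum_f_sr f n : sum_f_R0 f n = sr 0 (S n) f.
Proof. induction n; simpl; [lra|]. rewrite IHn. simpl. reflexivity. Qed.

Lemma sr_sub a n m f : (m <= n)%nat -> (forall i, (a <= i < a+n)%nat -> 0 <= f i) -> sr a m f <= sr a n f.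
Proof. intros Hmn H. replace n with (m + (n - m))%nat by lia. rewrite sr_split.
  assert (0 <= sr (a+m) (n-m) f) by (apply sr_nonneg; intros; apply H; lia). lra. Qed.

Lemma ln_le_x1 x : 0 < 1 + x -> ln (1 + x) <= x.
Proof. intros H. rewrite <- (ln_exp x) at 2. destruct (exp_ineq1_le x) as [Hl|He].
  left; apply ln_increasing; auto. rewrite He; lra. Qed.

Lemma ln_mono x y : 0 < x -> x <= y -> ln x <= ln y.
Proof. intros H [Hl|He]. left; apply ln_increasing; auto. subst; lra. Qed.

Definition lb (x : R) := x / (1 + x).
Definition rb (x : R) := 1 / (1 + x).

Fixpoint ivs (k : nat) (a b : R) : list (R * R) :=
  match k with
  | O => (a, b) :: nil
  | S k' => ivs k' (lb a) (lb b) ++ ivs k' (rb b) (rb a)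
  end.

Definition sumlen (l : list (R*R)) := fold_right (fun p acc => snd p - fst p + acc) 0 l.

Lemma sumlen_app l1 l2 : sumlen (l1 ++ l2) = sumlen l1 + sumlen l2.
Proof. induction l1; simpl; [lra|]. rewrite IHl1. lra. Qed.

Definition Ms k a b := sumlen (ivs k a b).

Lemma Ms_S k a b : Ms (S k) a b = Ms k (lb a) (lb b) + Ms k (rb b) (rb a).
Proof. unfold Ms. simpl. apply sumlen_app. Qed.

Lemma Ms_0 a b : Ms 0 a b = b - a.
Proof. unfold Ms; simpl; lra. Qed.

Lemma Ms_add k : forall a b c, Ms k a b + Ms k b c = Ms k a c.
Proof. induction k; intros. rewrite !Ms_0; lra.
  rewrite !Ms_S. rewrite <- (IHk (lb a) (lb b) (lb c)). rewrite <- (IHk (rb c) (rb b) (rb a)). lra. Qed.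

Lemma Ms_aa k a : Ms k a a = 0.
Proof. pose proof (Ms_add k a a a). lra. Qed.

Lemma lb_bounds x : 0 <= x -> 0 <= lb x.
Proof. intros. unfold lb. apply Rmult_le_pos; [lra|]; left; apply Rinv_0_lt_compat; lra. Qed.

Lemma lb_le x y : 0 <= x -> x <= y -> lb x <= lb y.
Proof. intros. unfold lb. apply (Rmult_le_reg_r ((1+x)*(1+y))). nra.
  field_simplify; try lra. Qed.

Lemma rb_le x y : 0 <= x -> x <= y -> rb y <= rb x.
Proof. intros. unfold rb. apply (Rmult_le_reg_r ((1+x)*(1+y))). nra.
  field_simplify; try lra. Qed.

Lemma rb_pos x : 0 <= x -> 0 < rb x.
Proof. intros. unfold rb. apply Rdiv_lt_0_compat; lra. Qed.

Lemma lb_le1 x : 0 <= x -> lb x <= 1.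
Proof. intros. unfold lb. apply (Rmult_le_reg_r (1+x)). lra. field_simplify; lra. Qed.
Lemma rb_le1 x : 0 <= x -> rb x <= 1.
Proof. intros. unfold rb. apply (Rmult_le_reg_r (1+x)). lra. field_simplify; lra. Qed.

Fixpoint prs (k : nat) : list (nat * nat) :=
  match k with
  | O => (0%nat, 1%nat) :: nil
  | S k' => map (fun p => (fst p + snd p, snd p)%nat) (prs k') ++
            map (fun p => (snd p, fst p + snd p)%nat) (prs k')
  end.

Definition term (p : nat * nat) a b :=
  (b - a) / ((INR (fst p) * a + INR (snd p)) * (INR (fst p) * b + INR (snd p))).

Definition sumt (l : list (nat*nat)) a b := fold_right (fun p acc => term p a b + acc) 0 l.

Lemma sumt_app l1 l2 a b : sumt (l1 ++ l2) a b = sumt l1 a b + sumt l2 a b.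
Proof. induction l1; simpl; [lra|]. rewrite IHl1; lra. Qed.

Lemma prs_pos k : forall p, In p (prs k) -> (1 <= snd p)%nat.
Proof. induction k; simpl; intros p H.
  destruct H as [H|[]]; subst; simpl; lia.
  apply in_app_or in H. destruct H as [H|H]; apply in_map_iff in H; destruct H as [q [Hq Hin]];
  subst; simpl; specialize (IHk q Hin); lia. Qed.

Lemma term_l r s a b : 0 <= a -> 0 <= b -> (1 <= s)%nat ->
  term ((r + s)%nat, s) a b = term (r, s) (lb a) (lb b).
Proof. intros Ha Hb Hs. unfold term, lb; simpl. rewrite plus_INR.
  assert (1 <= INR s) by (apply (le_INR 1); auto). assert (0 <= INR r) by apply pos_INR.
  assert (0 < INR r * a + INR s) by nra. assert (0 < INR r * b + INR s) by nra.
  assert (0 < (INR r + INR s) * a + INR s) by nra. assert (0 < (INR r + INR s) * b + INR s) by nra.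
  unfold Rdiv. field. repeat split; try lra.
Qed.

Lemma term_r r s a b : 0 <= a -> 0 <= b -> (1 <= s)%nat ->
  term (s, (r + s)%nat) a b = term (r, s) (rb b) (rb a).
Proof. intros Ha Hb Hs. unfold term, rb; simpl. rewrite plus_INR.
  assert (1 <= INR s) by (apply (le_INR 1); auto). assert (0 <= INR r) by apply pos_INR.
  assert (0 < INR s * a + (INR r + INR s)) by nra. assert (0 < INR s * b + (INR r + INR s)) by nra.
  unfold Rdiv. field. repeat split; try lra.
Qed.

Lemma sumt_map_l l a b : 0 <= a -> 0 <= b -> (forall p, In p l -> (1 <= snd p)%nat) ->
  sumt (map (fun p => (fst p + snd p, snd p)%nat) l) a b = sumt l (lb a) (lb b).
Proof. intros Ha Hb H. induction l; simpl; [reflexivity|].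
  rewrite IHl by (intros; apply H; simpl; auto). destruct a0 as [r s]. simpl.
  rewrite term_l; auto. specialize (H (r,s) (or_introl eq_refl)); auto. Qed.

Lemma sumt_map_r l a b : 0 <= a -> 0 <= b -> (forall p, In p l -> (1 <= snd p)%nat) ->
  sumt (map (fun p => (snd p, fst p + snd p)%nat) l) a b = sumt l (rb b) (rb a).
Proof. intros Ha Hb H. induction l; simpl; [reflexivity|].
  rewrite IHl by (intros; apply H; simpl; auto). destruct a0 as [r s]. simpl.
  rewrite term_r; auto. specialize (H (r,s) (or_introl eq_refl)); auto. Qed.

Lemma Ms_prs k : forall a b, 0 <= a -> 0 <= b -> Ms k a b = sumt (prs k) a b.
Proof. induction k; intros a b Ha Hb.
  rewrite Ms_0. unfold sumt, term; simpl. field.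
  rewrite Ms_S. simpl prs. rewrite sumt_app, sumt_map_l, sumt_map_r; auto using prs_pos.
  rewrite IHk, IHk; auto. left; apply rb_pos; auto. left; apply rb_pos; auto.
  all: try (apply lb_bounds; auto); auto; apply prs_pos. Qed.

Lemma sumt_nonneg l a b : 0 <= a <= b -> (forall p, In p l -> (1 <= snd p)%nat) -> 0 <= sumt l a b.
Proof. intros Hab H. induction l; simpl; [lra|].
  assert (0 <= sumt l a b) by (apply IHl; intros; apply H; simpl; auto).
  destruct a0 as [r s]. specialize (H (r,s) (or_introl eq_refl)). simpl in H.
  unfold term; simpl. assert (1 <= INR s) by (apply (le_INR 1); auto). assert (0 <= INR r) by apply pos_INR.
  assert (0 <= (b - a) / ((INR r * a + INR s) * (INR r * b + INR s))).
  { apply Rmult_le_pos; [lra|]. left; apply Rinv_0_lt_compat. apply Rmult_lt_0_compat; nra. }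
  lra. Qed.

Lemma Ms_nonneg k a b : 0 <= a <= b -> 0 <= Ms k a b.
Proof. intros. rewrite Ms_prs by lra. apply sumt_nonneg; auto. apply prs_pos. Qed.

Lemma sumt_cmp l a : 1/2 <= a <= 1 -> (forall p, In p l -> (1 <= snd p)%nat) ->
  (1 - a) * sumt l (1/2) 1 <= sumt l a 1.
Proof. intros Ha H. induction l; simpl; [lra|].
  assert ((1 - a) * sumt l (1/2) 1 <= sumt l a 1) by (apply IHl; intros; apply H; simpl; auto).
  destruct a0 as [r s]. specialize (H (r,s) (or_introl eq_refl)). simpl in H.
  unfold term; simpl. assert (1 <= INR s) by (apply (le_INR 1); auto). assert (0 <= INR r) by apply pos_INR.
  assert ((1-a) * ((1 - 1/2) / ((INR r * (1/2) + INR s) * (INR r * 1 + INR s))) <=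
          (1 - a) / ((INR r * a + INR s) * (INR r * 1 + INR s))).
  { assert (E1: (1 - 1/2) / ((INR r * (1/2) + INR s) * (INR r * 1 + INR s)) = / ((INR r + 2 * INR s) * (INR r + INR s))).
    { field. nra. }
    rewrite E1. unfold Rdiv. apply Rmult_le_compat_l; [lra|].
    apply Rinv_le_contravar. apply Rmult_lt_0_compat; nra. apply Rmult_le_compat; nra. }
  nra. Qed.

Lemma Ms_cmp k a : 1/2 <= a <= 1 -> (1 - a) * Ms k (1/2) 1 <= Ms k a 1.
Proof. intros. rewrite !Ms_prs by lra. apply sumt_cmp; auto. apply prs_pos. Qed.

Lemma farey_01 y : 0 <= y <= 1 -> 0 <= farey y <= 1.
Proof. intros H. unfold farey. destruct (Rle_dec y (1/2)).
  - split. apply Rmult_le_pos; [lra|]. left; apply Rinv_0_lt_compat; lra.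
    apply (Rmult_le_reg_r (1-y)); [lra|]. unfold Rdiv. rewrite Rmult_assoc, Rinv_l; lra.
  - split. apply Rmult_le_pos; [lra|]. left; apply Rinv_0_lt_compat; lra.
    apply (Rmult_le_reg_r y); [lra|]. unfold Rdiv. rewrite Rmult_assoc, Rinv_l; lra. Qed.

Lemma iter_01 k x : 0 <= x <= 1 -> 0 <= Nat.iter k farey x <= 1.
Proof. intros H; induction k; simpl; auto. apply farey_01; auto. Qed.

Lemma farey_pre y a b : 0 <= y <= 1 -> 0 <= a -> a <= farey y <= b ->
  (lb a <= y <= lb b) \/ (rb b <= y <= rb a).
Proof. intros Hy Ha. unfold farey, lb, rb. destruct (Rle_dec y (1/2)); intros [H1 H2].
  - left. assert (E: y / (1 - y) * (1 - y) = y) by (field; lra).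
    assert (a * (1-y) <= y) by (rewrite <- E at 2; apply Rmult_le_compat_r; lra).
    assert (y <= b * (1-y)) by (rewrite <- E at 1; apply Rmult_le_compat_r; lra).
    assert (0 <= b) by lra.
    split.
    + apply (Rmult_le_reg_r (1 + a)); [lra|]. unfold Rdiv; rewrite Rmult_assoc, Rinv_l; lra.
    + apply (Rmult_le_reg_r (1 + b)); [lra|]. unfold Rdiv; rewrite Rmult_assoc, Rinv_l; lra.
  - right. assert (E: (1 - y) / y * y = 1 - y) by (field; lra).
    assert (a * y <= 1 - y) by (rewrite <- E; apply Rmult_le_compat_r; lra).
    assert (1 - y <= b * y) by (rewrite <- E; apply Rmult_le_compat_r; lra).
    assert (0 <= b) by lra.
    split.
    + apply (Rmult_le_reg_r (1 + b)); [lra|]. unfold Rdiv; rewrite Rmult_1_l, Rinv_l; lra.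
    + apply (Rmult_le_reg_r (1 + a)); [lra|]. unfold Rdiv; rewrite Rmult_1_l, Rinv_l; lra.
Qed.

Lemma ivs_cover k : forall a b x, 0 <= a -> a <= b -> b <= 1 -> 0 <= x <= 1 ->
  a <= Nat.iter k farey x <= b -> exists p, In p (ivs k a b) /\ fst p <= x <= snd p.
Proof. induction k; intros a b x Ha Hab Hb Hx H.
  - exists (a,b). simpl in *. auto.
  - simpl in H. pose proof (iter_01 k x Hx) as Hy.
    destruct (farey_pre _ _ _ Hy Ha H) as [H1|H1]; simpl ivs.
    + destruct (IHk (lb a) (lb b) x) as [p [Hp1 Hp2]]; auto. apply lb_bounds; auto.
      apply lb_le; auto. apply lb_le1; lra.
      exists p; split; auto. apply in_or_app; auto.
    + destruct (IHk (rb b) (rb a) x) as [p [Hp1 Hp2]]; auto. left; apply rb_pos; lra.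
      apply rb_le; auto. apply rb_le1; lra.
      exists p; split; auto. apply in_or_app; auto.
Qed.

Lemma ivs_ord k : forall a b, 0 <= a -> a <= b -> forall p, In p (ivs k a b) -> fst p <= snd p.
Proof. induction k; intros a b Ha Hab p Hp; simpl in Hp.
  - destruct Hp as [Hp|[]]; subst; simpl; auto.
  - apply in_app_or in Hp; destruct Hp as [Hp|Hp].
    + eapply IHk; [| |exact Hp]. apply lb_bounds; auto. apply lb_le; auto.
    + eapply IHk; [| |exact Hp]. left; apply rb_pos; lra. apply rb_le; auto.
Qed.

Lemma sr_list l : sr 0 (length l) (fun i => snd (nth i l (0,0)) - fst (nth i l (0,0))) = sumlen l.
Proof. induction l; simpl length; [simpl; reflexivity|]. rewrite sr_front. simpl nth at 1 2.
  rewrite <- (sr_shift 0 (length l) 1). change (sumlen (a :: l)) with (snd a - fst a + sumlen l).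
  rewrite <- IHl. f_equal. apply sr_ext. intros i _. rewrite Nat.add_1_r. reflexivity. Qed.

Lemma sr_fin_sum g n : (forall i, (n <= i)%nat -> g i = 0) -> infinite_sum g (sr 0 n g).
Proof. intros H eps Heps. exists n. intros m Hm. rewrite sum_f_sr.
  replace (S m) with (n + (S m - n))%nat by lia. rewrite sr_split.
  replace (sr (0 + n) (S m - n) g) with (sr (0+n) (S m - n) (fun _ => 0)).
  rewrite sr_const. unfold Rdist. replace (sr 0 n g + INR (S m - n) * 0 - sr 0 n g) with 0 by ring.
  rewrite Rabs_R0; lra. apply sr_ext. intros; rewrite H; auto; lia. Qed.

Lemma inf_sum_nonneg g s : (forall i, 0 <= g i) -> infinite_sum g s -> 0 <= s.
Proof. intros Hg Hs. destruct (Rle_lt_dec 0 s) as [|Hlt]; auto.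
  destruct (Hs (-s)) as [n Hn]; [lra|]. specialize (Hn n (le_n n)).
  assert (0 <= sum_f_R0 g n) by (rewrite sum_f_sr; apply sr_nonneg; auto).
  unfold Rdist in Hn. rewrite Rabs_pos_eq in Hn; lra. Qed.

Lemma lam_bounds (u : R) k lam : 0 < u <= 1 ->
  lebesgue_measure_is (farey_cyl u (S k)) lam -> 0 <= lam <= Ms k u 1.
Proof. intros Hu [H1 H2]. split.
  - apply H2. intros s [a [b [Hab [_ Hs]]]]. eapply inf_sum_nonneg; [|exact Hs]. intros i; specialize (Hab i); lra.
  - set (l := ivs k u 1). set (n := length l).
    assert (Hall : forall dl, 0 < dl -> lam <= Ms k u 1 + 2 * INR n * dl).
    { intros dl Hdl.
      set (dd := fun i => if (i <? n)%nat then dl else 0).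
      set (ai := fun i => fst (nth i l (0,0)) - dd i).
      set (bi := fun i => snd (nth i l (0,0)) + dd i).
      apply H1. exists ai, bi. split; [|split].
      + intros i. unfold ai, bi, dd. destruct (Nat.ltb_spec i n).
        * assert (fst (nth i l (0,0)) <= snd (nth i l (0,0))).
          { apply (ivs_ord k u 1); try lra. apply nth_In; auto. }
          lra.
        * rewrite nth_overflow by auto. simpl; lra.
      + intros x [Hx Hit]. replace (S k - 1)%nat with k in Hit by lia.
        destruct (ivs_cover k u 1 x) as [p [Hp Hpx]]; try lra; auto.
        destruct (In_nth l p (0,0) Hp) as [i [Hi Hn]].
        exists i. unfold ai, bi, dd. destruct (Nat.ltb_spec i n); [|unfold n in *; lia].
        rewrite Hn. lra.
      + replace (Ms k u 1 + 2 * INR n * dl) with (sr 0 n (fun i => bi i - ai i)).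
        apply sr_fin_sum. intros i Hi. unfold ai, bi, dd. destruct (Nat.ltb_spec i n); [lia|].
        rewrite nth_overflow by auto. simpl; lra.
        replace (sr 0 n (fun i => bi i - ai i)) with (sr 0 n (fun i => (snd (nth i l (0,0)) - fst (nth i l (0,0))) + 2 * dl)).
        rewrite sr_plus, sr_const. unfold n. rewrite sr_list. unfold Ms. fold l. ring.
        apply sr_ext. intros i Hi. unfold ai, bi, dd. destruct (Nat.ltb_spec i n); [|lia]. ring. }
    destruct (Rle_lt_dec lam (Ms k u 1)) as [|Hlt]; auto.
    assert (0 <= INR n) by apply pos_INR.
    specialize (Hall ((lam - Ms k u 1) / (4 * (INR n + 1)))).
    assert (0 < (lam - Ms k u 1) / (4 * (INR n + 1))) by (apply Rdiv_lt_0_compat; lra).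
    specialize (Hall H0).
    assert (2 * INR n * ((lam - Ms k u 1) / (4 * (INR n + 1))) < lam - Ms k u 1).
    { unfold Rdiv. apply (Rmult_lt_reg_r (4 * (INR n + 1))). lra.
      rewrite !Rmult_assoc, Rinv_l by lra. nra. }
    lra.
Qed.

Lemma Ms_01 k : Ms k 0 1 = 1.
Proof. induction k. rewrite Ms_0; lra. rewrite Ms_S.
  replace (lb 0) with 0 by (unfold lb; field). replace (lb 1) with (1/2) by (unfold lb; field).
  replace (rb 1) with (1/2) by (unfold rb; field). replace (rb 0) with 1 by (unfold rb; field).
  rewrite Ms_add. auto. Qed.

Lemma Ms_lb_le k a b : 0 <= a <= b -> Ms k (lb a) (lb b) <= Ms (S k) a b.
Proof. intros. rewrite Ms_S. assert (0 <= Ms k (rb b) (rb a)). apply Ms_nonneg. split.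
  left; apply rb_pos; lra. apply rb_le; lra. lra. Qed.

Lemma INR_S_pos m : 0 < INR (S m).
Proof. apply lt_0_INR; lia. Qed.

Lemma lb_inv m : lb (1 / INR (S m)) = 1 / INR (S (S m)).
Proof. unfold lb. pose proof (INR_S_pos m). rewrite (S_INR (S m)). field. lra. Qed.

Lemma inv_INR2 : 1 / INR 2 = 1/2.
Proof. simpl. replace (1+1) with 2 by ring. reflexivity. Qed.
Lemma inv_INR1 : 1 / INR 1 = 1.
Proof. simpl. field. Qed.

Lemma strip_le k m : forall k0, (k0 = k + m)%nat -> Ms k (1 / INR (S (S m))) (1 / INR (S m)) <= Ms k0 (1/2) 1.
Proof. revert k. induction m; intros k k0 Hk.
  - subst. rewrite Nat.add_0_r. rewrite inv_INR2, inv_INR1. lra.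
  - eapply Rle_trans; [|apply (IHm (S k)); lia].
    rewrite <- (lb_inv (S m)), <- (lb_inv m). apply Ms_lb_le. pose proof (INR_S_pos (S m)). pose proof (INR_S_pos m).
    assert (0 <= 1 / INR (S m)) by (left; apply Rdiv_lt_0_compat; lra).
    split. apply lb_bounds; auto. unfold lb. apply (Rmult_le_reg_r (1 + 1 / INR (S m))). lra.
    unfold Rdiv at 1. rewrite Rmult_assoc, Rinv_l by lra. nra.
Qed.

Definition rr k := Ms k (1/2) 1.

Lemma rr_nonneg k : 0 <= rr k.
Proof. apply Ms_nonneg; lra. Qed.

Lemma q_decomp k p : Ms k (1 / INR (S p)) 1 = sr 0 p (fun m => Ms k (1 / INR (S (S m))) (1 / INR (S m))).
Proof. induction p. simpl sr. rewrite inv_INR1. apply Ms_aa.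
  change (sr 0 (S p) ?f) with (sr 0 p f + f (0 + p)%nat). rewrite <- IHp. rewrite Nat.add_0_l. rewrite Rplus_comm, Ms_add. reflexivity. Qed.

Lemma q_bound k p : Ms k (1 / INR (S p)) 1 <= sr 0 p (fun m => rr (k + m)).
Proof. rewrite q_decomp. apply sr_le. intros i _. apply strip_le. lia. Qed.

Definition VV i d := Ms i (INR d / INR (S d)) 1.

Lemma renewal k : forall m, (1 <= m)%nat ->
  Ms k 0 (1 / INR m) = 1 / INR (m + k) + sr 0 k (fun i => VV i (m + k - 1 - i)).
Proof. induction k; intros m Hm.
  - rewrite Ms_0, Nat.add_0_r. simpl. lra.
  - rewrite Ms_S. assert (0 < INR m) by (apply lt_0_INR; lia).
    replace (lb 0) with 0 by (unfold lb; field).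
    replace (lb (1 / INR m)) with (1 / INR (S m)) by (unfold lb; rewrite S_INR; field; lra).
    replace (rb 0) with 1 by (unfold rb; field).
    rewrite IHk by lia. simpl sr.
    replace (rb (1 / INR m)) with (INR m / INR (S m)) by (unfold rb; rewrite S_INR; field; lra).
    replace (S m + k)%nat with (m + S k)%nat by lia.
    rewrite Rplus_assoc; f_equal; f_equal.
    + apply sr_ext. intros i _. unfold VV. replace (m + S k - 1 - i)%nat with (m + k - 0 - i)%nat by lia. reflexivity.
    + unfold VV. replace (m + S k - 1 - k)%nat with m by lia. reflexivity.
Qed.

Lemma constraint k : sr 0 k (fun i => rr i / INR (S (k - i))) <= 1.
Proof. pose proof (renewal k 1 (le_n 1)). rewrite inv_INR1 in H.
  rewrite Ms_01 in H. assert (0 < 1 / INR (1 + k)) by (apply Rdiv_lt_0_compat; [lra|apply lt_0_INR; lia]).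
  assert (sr 0 k (fun i => rr i / INR (S (k - i))) <= sr 0 k (fun i => VV i (1 + k - 1 - i))).
  { apply sr_le. intros i Hi. replace (1 + k - 1 - i)%nat with (k - i)%nat by lia.
    set (d := (k - i)%nat). assert (1 <= INR d) by (apply (le_INR 1); unfold d; lia).
    unfold VV. eapply Rle_trans; [|apply Ms_cmp].
    - unfold rr. rewrite S_INR. replace (1 - INR d / (INR d + 1)) with (1 / (INR d + 1)) by (field; lra).
      unfold Rdiv; lra.
    - rewrite S_INR. split.
      + apply (Rmult_le_reg_r (INR d + 1)); [lra|]. replace (INR d / (INR d + 1) * (INR d + 1)) with (INR d) by (field; lra). lra.
      + apply (Rmult_le_reg_r (INR d + 1)); [lra|]. replace (INR d / (INR d + 1) * (INR d + 1)) with (INR d) by (field; lra). lra. }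
  lra. Qed.

Lemma harm t : ln ((INR t + 2) / 2) <= sr 1 t (fun s => 1 / INR (S s)).
Proof. induction t. simpl. replace ((0+2)/2) with 1 by field. rewrite ln_1; lra.
  change (sr 1 (S t) ?f) with (sr 1 t f + f (1 + t)%nat).
  assert (0 <= INR t) by apply pos_INR.
  replace ((INR (S t) + 2) / 2) with (((INR t + 2) / 2) * (1 + 1 / (INR t + 2))) by (rewrite S_INR; field; lra).
  rewrite ln_mult. 2: apply Rdiv_lt_0_compat; lra. 2: assert (0 < 1 / (INR t + 2)) by (apply Rdiv_lt_0_compat; lra); lra.
  assert (ln (1 + 1 / (INR t + 2)) <= 1 / (INR t + 2)).
  { apply ln_le_x1. assert (0 < 1 / (INR t + 2)) by (apply Rdiv_lt_0_compat; lra); lra. }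
  replace (INR (S (1 + t))) with (INR t + 2) by (rewrite !S_INR; simpl; lra). lra. Qed.

Definition Fm m j := if (j <? m)%nat then rr j / INR (S (m - j)) else 0.

Lemma Fm_nonneg m j : 0 <= Fm m j.
Proof. unfold Fm. destruct (Nat.ltb_spec j m); [|lra]. apply Rmult_le_pos. apply rr_nonneg.
  left; apply Rinv_0_lt_compat, INR_S_pos. Qed.

Lemma Fm_row m a t : sr a t (Fm m) <= 1.
Proof. eapply Rle_trans; [|apply (constraint m)].
  apply Rle_trans with (sr 0 (a + t) (Fm m)).
  { rewrite sr_split. simpl. assert (0 <= sr 0 a (Fm m)) by (apply sr_nonneg; intros; apply Fm_nonneg). lra. }
  destruct (Nat.le_gt_cases (a + t) m).
  - rewrite (sr_ext 0 (a+t) (Fm m) (fun i => rr i / INR (S (m - i)))).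
    apply sr_sub; auto. intros. apply Rmult_le_pos. apply rr_nonneg. left; apply Rinv_0_lt_compat, INR_S_pos.
    intros i Hi. unfold Fm. destruct (Nat.ltb_spec i m); [reflexivity|lia].
  - replace (a + t)%nat with (m + (a + t - m))%nat by lia. rewrite sr_split.
    rewrite (sr_ext (0 + m) _ (Fm m) (fun _ => 0)). rewrite sr_const, Rmult_0_r, Rplus_0_r.
    right. apply sr_ext. intros i Hi. unfold Fm. destruct (Nat.ltb_spec i m); [reflexivity|lia].
    intros i Hi. unfold Fm. destruct (Nat.ltb_spec i m); [lia|reflexivity].
Qed.

Lemma col_lower a t j : (1 <= t)%nat -> (a <= j < a + t)%nat ->
  rr j * ln ((INR t + 2) / 2) <= sr (a + 1) (2 * t) (fun m => Fm m j).
Proof. intros Ht Hj.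
  replace (2 * t)%nat with ((j - a) + (t + (t - (j - a))))%nat by lia.
  rewrite sr_split, sr_split.
  assert (0 <= sr (a + 1) (j - a) (fun m => Fm m j)) by (apply sr_nonneg; intros; apply Fm_nonneg).
  assert (0 <= sr (a + 1 + (j - a) + t) (t - (j - a)) (fun m => Fm m j)) by (apply sr_nonneg; intros; apply Fm_nonneg).
  replace (a + 1 + (j - a))%nat with (1 + j)%nat in * by lia.
  assert (rr j * ln ((INR t + 2) / 2) <= sr (1 + j) t (fun m => Fm m j)).
  { rewrite <- sr_shift. rewrite (sr_ext 1 t _ (fun i => rr j * (1 / INR (S i)))).
    rewrite sr_scal. apply Rmult_le_compat_l. apply rr_nonneg. apply harm.
    intros i Hi. unfold Fm. destruct (Nat.ltb_spec j (i + j)); [|lia].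
    replace (i + j - j)%nat with i by lia. unfold Rdiv; ring. }
  lra. Qed.

Lemma block_bound a t : (1 <= t)%nat -> sr a t rr * ln ((INR t + 2) / 2) <= 2 * INR t.
Proof. intros Ht.
  assert (H1 : sr (a+1) (2 * t) (fun m => sr a t (fun j => Fm m j)) <= 2 * INR t).
  { eapply Rle_trans. apply (sr_le _ _ _ (fun _ => 1)). intros; apply Fm_row.
    rewrite sr_const, mult_INR. simpl. lra. }
  rewrite (sr_swap (a+1) (2*t) a t Fm) in H1.
  eapply Rle_trans; [|exact H1]. rewrite Rmult_comm, <- sr_scal.
  apply sr_le. intros j Hj. rewrite Rmult_comm. apply col_lower; auto. Qed.

Lemma ln_t_pos t : (1 <= t)%nat -> 0 < ln ((INR t + 2) / 2).
Proof. intros. rewrite <- ln_1. apply ln_increasing. lra. assert (1 <= INR t) by (apply (le_INR 1); auto). lra. Qed.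

Lemma block_bound' a t : (1 <= t)%nat -> sr a t rr <= 2 * INR t / ln ((INR t + 2) / 2).
Proof. intros Ht. pose proof (ln_t_pos t Ht). pose proof (block_bound a t Ht).
  apply (Rmult_le_reg_r (ln ((INR t + 2) / 2))); auto. unfold Rdiv. rewrite Rmult_assoc, Rinv_l; lra. Qed.

Lemma W_bound Mn : forall K, (K < Mn)%nat ->
  - ln (1 - INR K / INR Mn) <= sr 1 K (fun i => 1 / (INR Mn - INR i)).
Proof. induction K; intros HK.
  - simpl. replace (1 - 0 / INR Mn) with 1 by (unfold Rdiv; ring). rewrite ln_1; lra.
  - change (sr 1 (S K) ?f) with (sr 1 K f + f (1 + K)%nat).
    assert (HM : INR (S K) < INR Mn) by (apply lt_INR; auto).
    rewrite S_INR in HM. assert (0 <= INR K) by apply pos_INR.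
    replace (1 - INR (S K) / INR Mn) with ((1 - INR K / INR Mn) * / (1 + 1 / (INR Mn - INR K - 1)))
      by (rewrite S_INR; field; lra).
    assert (0 < 1 / (INR Mn - INR K - 1)) by (apply Rdiv_lt_0_compat; lra).
    rewrite ln_mult, ln_Rinv. 2: lra. 3: apply Rinv_0_lt_compat; lra.
    2: { replace (1 - INR K / INR Mn) with ((INR Mn - INR K) / INR Mn) by (field; lra). apply Rdiv_lt_0_compat; lra. }
    assert (ln (1 + 1 / (INR Mn - INR K - 1)) <= 1 / (INR Mn - INR K - 1)) by (apply ln_le_x1; lra).
    replace (INR (1 + K)) with (INR K + 1) by (rewrite plus_INR; simpl; ring).
    replace (INR Mn - (INR K + 1)) with (INR Mn - INR K - 1) by ring.
    specialize (IHK ltac:(lia)). lra.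
Qed.

Lemma exchange (Q g : nat -> R) n :
  sr 1 n (fun K => Q K * sr 1 K g) = sr 1 n (fun i => g i * (sr 1 n Q - sr 1 (i - 1) Q)).
Proof. induction n. reflexivity.
  change (sr 1 (S n) ?f) with (sr 1 n f + f (1 + n)%nat). rewrite IHn.
  change (sr 1 (S n) Q) with (sr 1 n Q + Q (1 + n)%nat).
  replace (1 + n - 1)%nat with n by lia.
  change (sr 1 (1 + n) g) with (sr 1 n g + g (1 + n)%nat).
  rewrite (sr_ext 1 n (fun i => g i * (sr 1 n Q + Q (1 + n)%nat - sr 1 (i - 1) Q))
                     (fun i => g i * (sr 1 n Q - sr 1 (i - 1) Q) + Q (1 + n)%nat * g i)).
  rewrite sr_plus, sr_scal. ring. intros; ring. Qed.

Lemma tail_eq (Q : nat -> R) n i : (1 <= i <= n)%nat -> sr 1 n Q - sr 1 (i - 1) Q = sr i (n - i + 1) Q.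
Proof. intros H. replace n with ((i - 1) + (n - i + 1))%nat at 1 by lia. rewrite sr_split.
  replace (1 + (i - 1))%nat with i by lia. ring. Qed.

Definition hh (l : nat) := 1 / ln ((INR l + 2) / 2).

Lemma hh_mono l1 l2 : (1 <= l1 <= l2)%nat -> 0 < hh l2 <= hh l1.
Proof. intros H. unfold hh. pose proof (ln_t_pos l1 ltac:(lia)). pose proof (ln_t_pos l2 ltac:(lia)).
  split. apply Rdiv_lt_0_compat; lra.
  unfold Rdiv. rewrite !Rmult_1_l. apply Rinv_le_contravar; auto. pose proof (pos_INR l1). apply ln_mono. lra.
  assert (INR l1 <= INR l2) by (apply le_INR; lia). lra. Qed.

Lemma hh_sum n s : (s <= n)%nat ->
  sr 1 n (fun i => hh (n - i + 1)) <= INR s * hh 1 + INR n * hh (S s).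
Proof. intros Hs. replace n with ((n - s) + s)%nat at 1 by lia. rewrite sr_split.
  assert (sr 1 (n - s) (fun i => hh (n - i + 1)) <= INR (n - s) * hh (S s)).
  { rewrite <- (sr_const 1 (n - s) (hh (S s))). apply sr_le. intros i Hi. apply hh_mono. lia. }
  assert (sr (1 + (n - s)) s (fun i => hh (n - i + 1)) <= INR s * hh 1).
  { rewrite <- (sr_const (1 + (n - s)) s (hh 1)). apply sr_le. intros i Hi. apply hh_mono. lia. }
  assert (INR (n - s) <= INR n) by (apply le_INR; lia).
  assert (0 < hh (S s)) by (apply (hh_mono (S s) (S s)); lia).
  nra. Qed.

Lemma sqrt_part n : (2 <= n)%nat ->
  INR (Nat.sqrt n) * hh 1 + INR n * hh (S (Nat.sqrt n)) <= (2 / ln (3/2) + 4) * (INR n / ln (INR n)).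
Proof. intros Hn. set (s := Nat.sqrt n). pose proof (Nat.sqrt_spec' n) as [H1 H2]. fold s in H1, H2.
  assert (Hs1 : (1 <= s)%nat). { unfold s. rewrite <- Nat.sqrt_le_square. lia. }
  assert (HnR : 2 <= INR n) by (apply (le_INR 2); auto).
  assert (Hln : 0 < ln (INR n)) by (rewrite <- ln_1; apply ln_increasing; lra).
  assert (HsR : 1 <= INR s) by (apply (le_INR 1); auto).
  assert (Hss : INR s * INR s <= INR n) by (rewrite <- mult_INR; apply le_INR; auto).
  assert (Hns : INR n <= (INR s + 1) * (INR s + 1)) by (rewrite <- S_INR, <- mult_INR; apply le_INR; lia).
  assert (L1 : ln (INR n) <= 2 * ln (INR s + 1)).
  { replace (2 * ln (INR s + 1)) with (ln ((INR s + 1) * (INR s + 1))) by (rewrite ln_mult; lra).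
    apply ln_mono; lra. }
  assert (L2 : ln (INR s + 1) <= INR s) by (rewrite Rplus_comm; apply ln_le_x1; lra).
  assert (L3 : ln (INR s + 1) <= 2 * ln ((INR s + 3) / 2)).
  { replace (2 * ln ((INR s + 3) / 2)) with (ln ((INR s + 3) / 2 * ((INR s + 3) / 2))) by (rewrite ln_mult; try lra).
    apply ln_mono. lra. nra. }
  assert (Hl3 : 0 < ln ((INR s + 3) / 2)) by (rewrite <- ln_1; apply ln_increasing; lra).
  assert (E1 : hh 1 = 1 / ln (3/2)) by (unfold hh; simpl; f_equal; f_equal; field).
  assert (E2 : hh (S s) = 1 / ln ((INR s + 3) / 2)) by (unfold hh; rewrite S_INR; do 3 f_equal; ring).
  assert (Hl32 : 0 < ln (3/2)) by (rewrite <- ln_1; apply ln_increasing; lra).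
  rewrite E1, E2.
  assert (A1 : INR s <= 2 * INR n / ln (INR n)).
  { apply (Rmult_le_reg_r (ln (INR n))); auto. unfold Rdiv. rewrite Rmult_assoc, Rinv_l by lra. nra. }
  assert (A2 : 1 / ln ((INR s + 3) / 2) <= 4 / ln (INR n)).
  { apply (Rmult_le_reg_r (ln (INR n) * ln ((INR s + 3) / 2))). nra.
    replace (1 / ln ((INR s + 3) / 2) * (ln (INR n) * ln ((INR s + 3) / 2))) with (ln (INR n)) by (field; lra).
    replace (4 / ln (INR n) * (ln (INR n) * ln ((INR s + 3) / 2))) with (4 * ln ((INR s + 3) / 2)) by (field; lra).
    lra. }
  assert (0 <= INR n / ln (INR n)) by (left; apply Rdiv_lt_0_compat; lra).
  assert (INR s * (1 / ln (3/2)) <= 2 / ln (3/2) * (INR n / ln (INR n))).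
  { replace (2 / ln (3/2) * (INR n / ln (INR n))) with ((2 * INR n / ln (INR n)) * (1 / ln (3/2))) by (field; lra).
    apply Rmult_le_compat_r; auto. left; apply Rdiv_lt_0_compat; lra. }
  assert (INR n * (1 / ln ((INR s + 3) / 2)) <= 4 * (INR n / ln (INR n))).
  { replace (4 * (INR n / ln (INR n))) with (INR n * (4 / ln (INR n))) by (field; lra).
    apply Rmult_le_compat_l; lra. }
  lra. Qed.

Theorem mainTheorem11 (N : nat) (HN : (2 <= N)%nat) :
  exists (C : R) (n0 : nat),
    forall (n : nat), (n0 <= n)%nat -> (2 <= n)%nat ->
    forall (lam : nat -> R),
      (forall k : nat, lebesgue_measure_is (farey_cyl (1 / INR N) (S k)) (lam k)) ->
      Rabs (sum_f_R0 (fun j => lam (S j) * ln (1 - INR (S j) / INR (n + N))) (n - 1))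
        <= C * (INR n / ln (INR n)).
Proof.
  assert (Hl32 : 0 < ln (3/2)) by (rewrite <- ln_1; apply ln_increasing; lra).
  exists (2 * INR N * (2 / ln (3/2) + 4)), 2%nat. intros n _ Hn lam Hlam.
  set (p := (N - 1)%nat). assert (HNp : N = S p) by (unfold p; lia).
  assert (HNR : 2 <= INR N) by (apply (le_INR 2); auto).
  set (u := 1 / INR N).
  assert (Hu : 0 < u <= 1). { unfold u. split. apply Rdiv_lt_0_compat; lra.
    apply (Rmult_le_reg_r (INR N)); [lra|]. unfold Rdiv; rewrite Rmult_assoc, Rinv_l; lra. }
  set (Q := fun K => Ms K u 1).
  assert (HQ : forall K, 0 <= lam K <= Q K) by (intros; apply lam_bounds; auto).
  assert (HQ0 : forall K, 0 <= Q K) by (intros; unfold Q; apply Ms_nonneg; lra).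
  assert (Qblock : forall i l, (1 <= l)%nat -> sr i l Q <= INR p * (2 * INR l / ln ((INR l + 2) / 2))).
  { intros i l Hl. eapply Rle_trans.
    apply (sr_le _ _ _ (fun K => sr 0 p (fun m => rr (K + m)))).
    { intros K _. unfold Q, u. rewrite HNp. apply q_bound. }
    rewrite sr_swap. rewrite <- (sr_const 0 p). apply sr_le. intros m _.
    rewrite sr_shift. apply block_bound'; auto. }
  set (Mn := (n + N)%nat). set (g := fun i => 1 / (INR Mn - INR i)).
  assert (S1 : Rabs (sum_f_R0 (fun j => lam (S j) * ln (1 - INR (S j) / INR Mn)) (n - 1))
               <= sr 1 n (fun K => Q K * sr 1 K g)).
  { eapply Rle_trans. apply sum_f_R0_triangle. rewrite sum_f_sr. replace (S (n - 1)) with n by lia.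
    rewrite <- (sr_shift 0 n 1). apply sr_le. intros i Hi. rewrite Nat.add_1_r.
    assert (HK : (S i < Mn)%nat) by (unfold Mn; lia).
    pose proof (W_bound Mn (S i) HK) as HW.
    assert (HKR : INR (S i) < INR Mn) by (apply lt_INR; auto).
    assert (0 < INR (S i)) by apply INR_S_pos.
    assert (Hx : 0 < 1 - INR (S i) / INR Mn <= 1).
    { split. apply (Rmult_lt_reg_r (INR Mn)). lra.
      replace ((1 - INR (S i) / INR Mn) * INR Mn) with (INR Mn - INR (S i)) by (field; lra). lra.
      assert (0 <= INR (S i) / INR Mn) by (left; apply Rdiv_lt_0_compat; lra). lra. }
    assert (Hln : ln (1 - INR (S i) / INR Mn) <= 0) by (rewrite <- ln_1; apply ln_mono; lra).
    destruct (HQ (S i)) as [HQa HQb].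
    rewrite Rabs_mult, (Rabs_pos_eq (lam (S i))) by exact HQa. rewrite (Rabs_left1 _ Hln).
    unfold g. apply Rmult_le_compat; lra. }
  eapply Rle_trans; [exact S1|].
  rewrite exchange.
  eapply Rle_trans.
  { apply (sr_le _ _ _ (fun i => 2 * INR p * hh (n - i + 1))).
    intros i Hi. rewrite tail_eq by lia. set (l := (n - i + 1)%nat).
    assert (Hl1 : (1 <= l)%nat) by (unfold l; lia).
    assert (HlR : 1 <= INR l) by (apply (le_INR 1); auto).
    assert (Hg : 0 <= g i <= 1 / INR l).
    { unfold g. assert (INR l <= INR Mn - INR i).
      { unfold l, Mn. rewrite <- minus_INR by lia. apply le_INR. lia. }
      split. left; apply Rdiv_lt_0_compat; lra.
      unfold Rdiv. rewrite !Rmult_1_l. apply Rinv_le_contravar; lra. }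
    pose proof (Qblock i l Hl1) as HB.
    assert (0 <= sr i l Q) by (apply sr_nonneg; auto).
    eapply Rle_trans. apply Rmult_le_compat. apply Hg. exact H. apply Hg. exact HB.
    unfold hh. pose proof (ln_t_pos l Hl1). right. field. lra. }
  rewrite sr_scal.
  pose proof (hh_sum n (Nat.sqrt n) (Nat.sqrt_le_lin n)) as H1.
  pose proof (sqrt_part n Hn) as H2.
  assert (HpN : INR p <= INR N) by (apply le_INR; lia).
  assert (0 <= INR p) by apply pos_INR.
  assert (HnR : 2 <= INR n) by (apply (le_INR 2); auto).
  assert (Hln : 0 < ln (INR n)) by (rewrite <- ln_1; apply ln_increasing; lra).
  assert (0 <= INR n / ln (INR n)) by (left; apply Rdiv_lt_0_compat; lra).
  assert (0 <= 2 / ln (3/2)) by (left; apply Rdiv_lt_0_compat; lra).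
  assert (0 <= sr 1 n (fun i => hh (n - i + 1))).
  { apply sr_nonneg. intros i Hi. left. apply (hh_mono (n - i + 1) (n - i + 1)); lia. }
  apply Rle_trans with (2 * INR p * ((2 / ln (3/2) + 4) * (INR n / ln (INR n)))).
  { apply Rmult_le_compat_l; lra. }
  rewrite <- Rmult_assoc. apply Rmult_le_compat_r; auto. nra.
Qed.
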